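(* Let $A=[D,\boldsymbol n,\dots,\boldsymbol n]\in\mathbb Z^{\ell\times(\ell+k)}$ be a Type I$_k$ weight matrix such that $V_A$ is a faithful $\mathbb T^\ell$-module, and write $\alpha=\alpha(A)$, $m_i=m_i(A)$, $\eta=\eta(A)$. Then the algebra of $\mathbb T^\ell$-invariant polynomials in $z_1,\dots,z_{\ell+k},\overline{z_1},\dots,\overline{z_{\ell+k}}$ with complex coefficients (equivalently, via real and imaginary parts, $\mathbb R[V_A]^{\mathbb T^\ell}$) is generated by: (1) the $\ell$ quadratics $r_i=z_i\overline{z_i}$, $1\le i\le\ell$; (2) the $k^2$ quadratics $p_{i,j}=z_{\ell+i}\overline{z_{\ell+j}}$, $1\le i,j\le k$; (3) the $\binom{\alpha+k-1}{k-1}$ monomials $q_{\boldsymbol s}=\prod_{i=1}^\ell z_i^{m_i}\prod_{i=1}^kz_{\ell+i}^{s_i}$ of degree $\eta$, for $\boldsymbol s=(s_1,\dots,s_k)\in\mathbb Z_{\ge0}^k$ with $\sum_is_i=\alpha$; (4) their conjugates $\overline{q_{\boldsymbol s}}$. Moreover, $\mathbb R[M_0(A)]$ (complexified) is generated by the images of the generators in (2), (3), (4).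
   Context: For $A=(a_{ij})\in\mathbb Z^{\ell\times n}$ with columns $\boldsymbol a_j$, $V_A=\mathbb C^n$ (coordinates $z_j$) with $\mathbb T^\ell$ acting by $z_j\mapsto\boldsymbol t^{\boldsymbol a_j}z_j$, $\boldsymbol t^{\boldsymbol a_j}=\prod_it_i^{a_{ij}}$; faithful = effective. Moment map $J_i=\tfrac12\sum_ja_{ij}z_j\overline{z_j}$, $Z_A=J_A^{-1}(0)$, $M_0(A)=Z_A/\mathbb T^\ell$, $\mathbb R[M_0(A)]=\mathbb R[V_A]^{\mathbb T^\ell}/(\text{invariant polynomials vanishing on }Z_A)$. Type I$_k$: $A=[D,\boldsymbol n,\dots,\boldsymbol n]$ ($k$ copies of $\boldsymbol n$) with $D=\operatorname{diag}(-a_1,\dots,-a_\ell)$, $a_i>0$, $\boldsymbol n=(n_1,\dots,n_\ell)^T$, $n_i>0$. $\alpha(A)=\operatorname{lcm}(a_1,\dots,a_\ell)$, $m_i(A)=n_i\alpha(A)/a_i$, $\beta(A)=\sum_im_i(A)$, $\eta(A)=\alpha(A)+\beta(A)$. *)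

(* Defs.v *)
From HB Require Import structures.
From mathcomp Require Import all_boot all_order all_algebra all_field.
Set Implicit Arguments. Unset Strict Implicit. Unset Printing Implicit Defensive.
Import Order.TTheory GRing.Theory Num.Theory.
Local Open Scope ring_scope.

(* Points of V_A = C^(l+k): coordinates z_j, j : 'I_(l+k).
   Coordinates 0..l-1 are z_1..z_l; coordinate rshift l i is z_(l+i+1). *)
Definition pt (l k : nat) := 'I_(l + k) -> algC.

(* Type I_k weight matrix A = [D, n, ..., n], D = diag(-a_1,...,-a_l). *)
Definition typeI_A (l k : nat) (a nn : 'I_l -> nat) (i : 'I_l) (j : 'I_(l + k)) : int :=
  match split j with
  | inl j' => if j' == i then - (a i)%:Z else 0
  | inr _ => (nn i)%:Z
  end.

Definition in_torus (l : nat) (t : 'I_l -> algC) : Prop := forall i, `|t i| = 1.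

Definition tchar (l N : nat) (A : 'I_l -> 'I_N -> int) (t : 'I_l -> algC) (j : 'I_N) : algC :=
  \prod_(i < l) (t i) ^ (A i j).

Definition tact (l N : nat) (A : 'I_l -> 'I_N -> int) (t : 'I_l -> algC) (z : 'I_N -> algC)
  : 'I_N -> algC := fun j => tchar A t j * z j.

Definition faithful (l N : nat) (A : 'I_l -> 'I_N -> int) : Prop :=
  forall t, in_torus t -> (forall j, tchar A t j = 1) -> forall i, t i = 1.

Inductive gen_alg (X : Type) (G : (X -> algC) -> Prop) : (X -> algC) -> Prop :=
| ga_gen f : G f -> gen_alg G f
| ga_const (c : algC) : gen_alg G (fun _ => c)
| ga_add f g : gen_alg G f -> gen_alg G g -> gen_alg G (fun x => f x + g x)
| ga_mul f g : gen_alg G f -> gen_alg G g -> gen_alg G (fun x => f x * g x)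
| ga_ext f g : (forall x, f x = g x) -> gen_alg G f -> gen_alg G g.

(* Polynomials in z_j and conj(z_j) with complex coefficients, as functions on C^N. *)
Definition coord_gen (N : nat) (f : ('I_N -> algC) -> algC) : Prop :=
  exists j : 'I_N, f = (fun z => z j) \/ f = (fun z => (z j)^*).

Definition is_poly (N : nat) (f : ('I_N -> algC) -> algC) : Prop :=
  gen_alg (@coord_gen N) f.

Definition torus_invariant (l N : nat) (A : 'I_l -> 'I_N -> int) (f : ('I_N -> algC) -> algC) : Prop :=
  forall t, in_torus t -> forall z, f (tact A t z) = f z.

(* Z_A = J_A^{-1}(0), J_i = 1/2 sum_j a_ij z_j conj(z_j) *)
Definition in_ZA (l N : nat) (A : 'I_l -> 'I_N -> int) (z : 'I_N -> algC) : Prop :=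
  forall i, (2%:R)^-1 * \sum_(j < N) (A i j)%:~R * (z j * (z j)^*) = 0.

Definition alphaA (l : nat) (a : 'I_l -> nat) : nat := \big[lcmn/1%N]_(i < l) a i.
Definition mA (l : nat) (a nn : 'I_l -> nat) (i : 'I_l) : nat := (nn i * alphaA a %/ a i)%N.
Definition etaA (l : nat) (a nn : 'I_l -> nat) : nat := (alphaA a + \sum_(i < l) mA a nn i)%N.

Definition gen_r (l k : nat) (i : 'I_l) : pt l k -> algC :=
  fun z => z (lshift k i) * (z (lshift k i))^*.
Definition gen_p (l k : nat) (i j : 'I_k) : pt l k -> algC :=
  fun z => z (rshift l i) * (z (rshift l j))^*.
Definition gen_q (l k : nat) (a nn : 'I_l -> nat) (s : 'I_k -> nat) : pt l k -> algC :=
  fun z => (\prod_(i < l) z (lshift k i) ^+ mA a nn i) * \prod_(i < k) z (rshift l i) ^+ s i.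
Definition gen_qbar (l k : nat) (a nn : 'I_l -> nat) (s : 'I_k -> nat) : pt l k -> algC :=
  fun z => (gen_q a nn s z)^*.

Definition gens234 (l k : nat) (a nn : 'I_l -> nat) (f : pt l k -> algC) : Prop :=
  (exists i j, f = gen_p i j) \/
  (exists s : 'I_k -> nat, (\sum_(i < k) s i)%N = alphaA a /\
     (f = gen_q a nn s \/ f = gen_qbar a nn s)).

Definition gens1234 (l k : nat) (a nn : 'I_l -> nat) (f : pt l k -> algC) : Prop :=
  (exists i, f = @gen_r l k i) \/ gens234 a nn f.

(* Main.v *)
Require Import Defs.
From HB Require Import structures.
From mathcomp Require Import all_boot all_order all_algebra all_field.
From mathcomp Require Import zify.
Import Order.TTheory GRing.Theory Num.Theory.
Set Implicit Arguments. Unset Strict Implicit. Unset Printing Implicit Defensive.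
Local Open Scope ring_scope.

Section Mono.
Variable N : nat.

Definition mono (u v : 'I_N -> nat) (z : 'I_N -> algC) : algC :=
  \prod_(j < N) (z j ^+ u j * (z j)^* ^+ v j).

Definition addf (u v : 'I_N -> nat) : 'I_N -> nat := fun j => (u j + v j)%N.
Definition delta (a : 'I_N) : 'I_N -> nat := fun j => nat_of_bool (j == a).
Definition zerof : 'I_N -> nat := fun _ => 0%N.

Lemma mono_add u1 v1 u2 v2 z :
  mono (addf u1 u2) (addf v1 v2) z = mono u1 v1 z * mono u2 v2 z.
Proof.
rewrite /mono -big_split /=; apply: eq_bigr => j _.
by rewrite /addf !exprD mulrACA.
Qed.

Lemma mono0 z : mono zerof zerof z = 1.
Proof. by rewrite /mono big1 // => j _; rewrite mulr1. Qed.

Lemma mono_ext u v u' v' z : (forall j, u j = u' j) -> (forall j, v j = v' j) ->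
  mono u v z = mono u' v' z.
Proof. by move=> hu hv; apply: eq_bigr => j _; rewrite hu hv. Qed.

Lemma mono_delta a b z : mono (delta a) (delta b) z = z a * (z b)^*.
Proof.
rewrite /mono big_split /= (bigD1 a) //= big1 => [|j /negPf ne]; last by rewrite /delta ne.
rewrite (bigD1 b) //= big1 => [|j /negPf ne]; last by rewrite /delta ne.
by rewrite /delta !eqxx !mulr1 !expr1.
Qed.

Lemma mono_delta_l a z : mono (delta a) zerof z = z a.
Proof.
rewrite /mono (bigD1 a) //= big1 => [|j /negPf ne]; last by rewrite /delta ne mulr1.
by rewrite /delta eqxx /zerof mulr1 expr1 mulr1.
Qed.

Lemma mono_delta_r a z : mono zerof (delta a) z = (z a)^*.
Proof.
rewrite /mono (bigD1 a) //= big1 => [|j /negPf ne]; last by rewrite /delta ne mulr1.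
by rewrite /delta eqxx /zerof mul1r expr1 mulr1.
Qed.

Lemma mono_conj u v z : (mono u v z)^* = mono v u z.
Proof.
rewrite /mono rmorph_prod; apply: eq_bigr => j _.
rewrite rmorphM !rmorphXn /= conjCK; exact: mulrC.
Qed.

Definition trip := (algC * ('I_N -> nat) * ('I_N -> nat))%type.
Definition polyrep (s : seq trip) z := \sum_(x <- s) x.1.1 * mono x.1.2 x.2 z.

Lemma is_poly_rep f : is_poly f -> exists s, forall z, f z = polyrep s z.
Proof.
elim=> {f}.
- move=> f [j [->|->]].
    by exists [:: (1, delta j, zerof)] => z; rewrite /polyrep big_seq1 /= mono_delta_l mul1r.
  by exists [:: (1, zerof, delta j)] => z; rewrite /polyrep big_seq1 /= mono_delta_r mul1r.
- by move=> c; exists [:: (c, zerof, zerof)] => z; rewrite /polyrep big_seq1 /= mono0 mulr1.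
- move=> f g _ [s1 h1] _ [s2 h2]; exists (s1 ++ s2) => z.
  by rewrite /polyrep big_cat /= h1 h2.
- move=> f g _ [s1 h1] _ [s2 h2].
  exists [seq (x.1.1 * y.1.1, addf x.1.2 y.1.2, addf x.2 y.2) | x <- s1, y <- s2] => z.
  rewrite /polyrep big_allpairs_dep /= h1 h2 /polyrep mulr_suml; apply: eq_bigr => x _.
  rewrite mulr_sumr; apply: eq_bigr => y _ /=.
  by rewrite mono_add mulrACA.
- by move=> f g e _ [s h]; exists s => z; rewrite -e h.
Qed.

Lemma polyrep_gen (G : (('I_N -> algC) -> algC) -> Prop) (s : seq trip) :
  (forall x, List.In x s -> gen_alg G (mono x.1.2 x.2)) -> gen_alg G (polyrep s).
Proof.
elim: s => [|x s IH] h.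
  by apply: (@ga_ext _ _ (fun _ => 0)) => [z|]; [rewrite /polyrep big_nil | exact: ga_const].
apply: (@ga_ext _ _ (fun z => x.1.1 * mono x.1.2 x.2 z + polyrep s z)).
  by move=> z; rewrite /polyrep big_cons.
apply: ga_add; last by apply: IH => y hy; apply: h; right.
by apply: ga_mul; [exact: ga_const | apply: h; left].
Qed.

End Mono.

Section Weight.
Variables (l N : nat) (A : 'I_l -> 'I_N -> int).

Definition weight (u v : 'I_N -> nat) (i : 'I_l) : int :=
  \sum_(j < N) A i j * ((u j)%:Z - (v j)%:Z).

Lemma torus_conj (t : 'I_l -> algC) i : in_torus t -> (t i)^* = (t i)^-1.
Proof. by move=> ht; rewrite invC_norm ht expr1n invr1 mul1r. Qed.

Lemma torus_neq0 (t : 'I_l -> algC) i : in_torus t -> t i != 0.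
Proof. by move=> ht; rewrite -normr_eq0 ht oner_eq0. Qed.

Lemma tchar_neq0 t j : in_torus t -> tchar A t j != 0.
Proof.
move=> ht; apply/prodf_neq0 => i _; apply: expfz_neq0; exact: torus_neq0.
Qed.

Lemma tchar_conj t j : in_torus t -> (tchar A t j)^* = (tchar A t j)^-1.
Proof.
move=> ht; rewrite /tchar rmorph_prod -prodfV; apply: eq_bigr => i _.
rewrite rmorphXz ?unitfE ?torus_neq0 //= torus_conj // expfV //.
Qed.

Lemma prod_expz (n : nat) (F : 'I_n -> algC) (d : int) :
  (\prod_(i < n) F i) ^ d = \prod_(i < n) F i ^ d.
Proof.
by apply: (big_morph (fun x => x ^ d)) => [x y|]; [exact: expfzMl | exact: exp1rz].
Qed.

Lemma expz_sum (n0 : nat) (F : 'I_n0 -> int) (x : algC) : x != 0 ->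
  x ^ (\sum_(i < n0) F i) = \prod_(i < n0) x ^ F i.
Proof.
by move=> nx; apply: (big_morph (fun k => x ^ k)) => [m k|]; [exact: expfzDr | ].
Qed.

Lemma mono_act t u v z : in_torus t ->
  mono u v (tact A t z) = (\prod_(i < l) t i ^ weight u v i) * mono u v z.
Proof.
move=> ht.
rewrite /mono /tact.
have -> : \prod_(j < N) ((tchar A t j * z j) ^+ u j * (tchar A t j * z j)^* ^+ v j)
  = \prod_(j < N) (tchar A t j ^ ((u j)%:Z - (v j)%:Z) * (z j ^+ u j * (z j)^* ^+ v j)).
  apply: eq_bigr => j _.
  rewrite rmorphM /= tchar_conj // !exprMn mulrACA; congr (_ * _).
  by rewrite expfzDr ?tchar_neq0 // -exprz_inv.
rewrite big_split /=; congr (_ * _).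
rewrite /weight.
under [in RHS]eq_bigr => i _ do rewrite expz_sum ?torus_neq0 //.
rewrite exchange_big /=; apply: eq_bigr => j _.
by rewrite /tchar prod_expz; apply: eq_bigr => i _; rewrite exprz_exp.
Qed.

End Weight.

Section Avg.
Variables (M : nat) (zeta : algC).
Hypothesis (M_gt0 : (0 < M)%N) (pz : M.-primitive_root zeta).

Lemma zeta_norm : `|zeta| = 1.
Proof.
apply/eqP; rewrite -(pexpr_eq1 M_gt0) ?normr_ge0 // -normrX (prim_expr_order pz).
by rewrite normr1.
Qed.

Lemma zeta_neq0 : zeta != 0.
Proof. by rewrite -normr_eq0 zeta_norm oner_eq0. Qed.

Lemma zeta_expz_eq1 (w : int) : (`|w| < M)%N -> (zeta ^ w == 1) = (w == 0).
Proof.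
move=> hw; apply/idP/idP => [|/eqP ->]; last by rewrite expr0z.
case: w hw => n hn /=.
  rewrite -exprnP -(prim_order_dvd pz) => /dvdnP [c hc].
  by apply/eqP; move: hn; rewrite hc; case: c {hc} => //= c; rewrite mulSn; lia.
rewrite NegzE -exprz_inv -exprnP exprVn invr_eq1 -(prim_order_dvd pz).
by move/dvdn_leq => /(_ isT); move: hn; rewrite /= ; lia.
Qed.

Lemma geo (w : int) : (`|w| < M)%N ->
  \sum_(e < M) (zeta ^+ e) ^ w = if w == 0 then M%:R else 0.
Proof.
move=> hw; have := zeta_expz_eq1 hw; case: (eqVneq w 0) => [-> _|nw hx].
  by rewrite (eq_bigr (fun _ => 1)) ?sumr_const ?card_ord // => e _; rewrite expr0z.
have xN : (zeta ^ w) ^+ M = 1.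
  by rewrite exprnP exprzAC -exprnP (prim_expr_order pz) exp1rz.
have : (zeta ^ w - 1) * \sum_(e < M) (zeta ^ w) ^+ e == 0.
  by rewrite -subrX1 xN subrr.
rewrite mulf_eq0 subr_eq0 hx /= => /eqP h; rewrite -[RHS]h.
by apply: eq_bigr => e _; rewrite exprnP exprzAC -exprnP.
Qed.

Lemma avg (l : nat) (w : 'I_l -> int) : (forall i, `|w i| < M)%N ->
  \sum_(e : {ffun 'I_l -> 'I_M}) \prod_(i < l) (zeta ^+ e i) ^ w i
   = if [forall i, w i == 0] then M%:R ^+ l else 0.
Proof.
move=> hw; rewrite -(bigA_distr_bigA (fun i (e : 'I_M) => (zeta ^+ e) ^ w i)) /=.
under eq_bigr => i _ do rewrite geo //.
case: ifP => [/forallP h|/negbT].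
  by rewrite (eq_bigr (fun _ => M%:R)) ?prodr_const ?card_ord // => i _; rewrite h.
rewrite negb_forall => /existsP [i /negPf hi].
by rewrite (bigD1 i) //= hi mul0r.
Qed.

End Avg.

Lemma leq_sum_in (T : Type) (s : seq T) (F : T -> nat) x :
  List.In x s -> (F x <= \sum_(y <- s) F y)%N.
Proof.
elim: s => [//|y s IH] /= [->|h]; rewrite big_cons; first exact: leq_addr.
exact: leq_trans (IH h) (leq_addl _ _).
Qed.

Lemma In_filter (T : Type) (P : pred T) (s : seq T) x :
  List.In x (filter P s) -> List.In x s /\ P x.
Proof.
elim: s => [//|y s IH] /=; case: ifP => Py /=.
  by case=> [<-|/IH [h1 h2]]; [split; [left|] | split; [right|]].
by move/IH => [h1 h2]; split; [right|].
Qed.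

Lemma eq_big_In (T : Type) (s : seq T) (F G : T -> algC) :
  (forall x, List.In x s -> F x = G x) -> \sum_(x <- s) F x = \sum_(x <- s) G x.
Proof.
elim: s => [|y s IH] h; first by rewrite !big_nil.
by rewrite !big_cons h /=; [rewrite IH // => x hx; apply: h; right | left].
Qed.

Section Proj.
Variables (l N : nat) (A : 'I_l -> 'I_N -> int).

Lemma inv_proj f : is_poly f -> torus_invariant A f ->
  exists s : seq (trip N), (forall x, List.In x s -> forall i, weight A x.1.2 x.2 i = 0)
    /\ forall z, f z = polyrep s z.
Proof.
move=> /is_poly_rep [s0 hs0] hinv.
pose P (x : trip N) := [forall i, weight A x.1.2 x.2 i == 0].
exists (filter P s0); split.
  by move=> x hx i; have [_ h] := In_filter hx; apply/eqP; move/forallP: h; apply.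
pose M := (\sum_(x <- s0) \sum_(i < l) `|weight A x.1.2 x.2 i|).+1.
have M_gt0 : (0 < M)%N by [].
have hb : forall x, List.In x s0 -> forall i, (`|weight A x.1.2 x.2 i| < M)%N.
  move=> x hx i; rewrite ltnS; apply: leq_trans (leq_sum_in _ hx).
  by rewrite (bigD1 i) //= leq_addr.
have [zeta pz] := C_prim_root_exists M_gt0.
pose te (e : {ffun 'I_l -> 'I_M}) := fun i => zeta ^+ e i.
have hte e : in_torus (te e) by move=> i; rewrite /te normrX (zeta_norm M_gt0 pz) expr1n.
move=> z.
have Mnz : (M%:R ^+ l : algC) != 0 by rewrite expf_neq0 // pnatr_eq0.
apply: (mulIf Mnz).
have -> : f z * M%:R ^+ l = \sum_(e : {ffun 'I_l -> 'I_M}) f (tact A (te e) z).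
  rewrite (eq_bigr (fun _ => f z)) => [|e _]; last by rewrite hinv.
  by rewrite sumr_const card_ffun !card_ord -natrX mulr_natr.
under eq_bigr => e _ do rewrite hs0 /polyrep.
under eq_bigr => e _ do under eq_bigr => x _ do rewrite mono_act //.
rewrite exchange_big /= /polyrep big_filter mulr_suml [in RHS]big_mkcond /=.
apply: eq_big_In => x hx.
under eq_bigr => e _ do rewrite mulrA mulrAC mulrC.
rewrite -mulr_suml /te (avg M_gt0 pz (hb x hx)) /P; case: ifP => _; first by rewrite mulrC.
by rewrite mul0r.
Qed.
End Proj.

Lemma sumz (k : nat) (F : 'I_k -> nat) : \sum_(j < k) (F j)%:Z = (\sum_(j < k) F j)%N%:Z.
Proof. by rewrite (big_morph Posz PoszD (erefl _)). Qed.

Section TypeI.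
Variables (l k : nat) (a nn : 'I_l -> nat).
Local Notation A := (@typeI_A l k a nn).
Local Notation L i := (lshift k i).
Local Notation R j := (rshift l j).

Lemma tA_l i i' : A i (L i') = if i' == i then - (a i)%:Z else 0.
Proof. by rewrite /typeI_A -[lshift k i']/(unsplit (inl i')) unsplitK. Qed.

Lemma tA_r i j : A i (R j) = (nn i)%:Z.
Proof. by rewrite /typeI_A -[rshift l j]/(unsplit (inr j)) unsplitK. Qed.

Lemma weight_typeI u v i : weight A u v i =
  - (a i)%:Z * ((u (L i))%:Z - (v (L i))%:Z)
  + (nn i)%:Z * \sum_(j < k) ((u (R j))%:Z - (v (R j))%:Z).
Proof.
rewrite /weight big_split_ord /= mulr_sumr; congr (_ + _).
  rewrite (bigD1 i) //= big1 ?addr0 => [|i' ne]; first by rewrite tA_l eqxx.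
  by rewrite tA_l (negPf ne) mul0r.
by apply: eq_bigr => j _; rewrite tA_r.
Qed.

End TypeI.

Section Peel.
Variables (l N : nat) (A : 'I_l -> 'I_N -> int).

Definition deg (u v : 'I_N -> nat) : nat := \sum_(j < N) (u j + v j).

Lemma weight_ext u v u' v' i : (forall j, u j = u' j) -> (forall j, v j = v' j) ->
  weight A u v i = weight A u' v' i.
Proof. by move=> hu hv; apply: eq_bigr => j _; rewrite hu hv. Qed.

Lemma deg_ext u v u' v' : (forall j, u j = u' j) -> (forall j, v j = v' j) ->
  deg u v = deg u' v'.
Proof. by move=> hu hv; apply: eq_bigr => j _; rewrite hu hv. Qed.

Lemma weight_add u1 v1 u2 v2 i :
  weight A (addf u1 u2) (addf v1 v2) i = weight A u1 v1 i + weight A u2 v2 i.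
Proof.
rewrite /weight -big_split /=; apply: eq_bigr => j _.
rewrite /addf -mulrDr; congr (_ * _); rewrite !PoszD; lia.
Qed.

Lemma deg_add u1 v1 u2 v2 : deg (addf u1 u2) (addf v1 v2) = (deg u1 v1 + deg u2 v2)%N.
Proof.
rewrite /deg -big_split /=; apply: eq_bigr => j _; rewrite /addf; lia.
Qed.

Lemma weight_swap u v i : weight A v u i = - weight A u v i.
Proof.
rewrite /weight -sumrN; apply: eq_bigr => j _; rewrite -mulrN opprB //.
Qed.

Lemma deg_swap u v : deg v u = deg u v.
Proof. by apply: eq_bigr => j _; rewrite addnC. Qed.

Lemma weight_delta a b i : weight A (delta a) (delta b) i = A i a - A i b.
Proof.
rewrite /weight; under eq_bigr => j _ do rewrite mulrBr.
rewrite sumrB (bigD1 a) //= big1 => [|j /negPf ne]; last by rewrite /delta ne mulr0.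
rewrite (bigD1 b) //= [X in _ - (_ + X)]big1 => [|j /negPf ne]; last by rewrite /delta ne mulr0.
by rewrite /delta !eqxx !mulr1 !addr0.
Qed.

Lemma gen_ext (G : (('I_N -> algC) -> algC) -> Prop) f g :
  (forall z, f z = g z) -> gen_alg G g -> gen_alg G f.
Proof. by move=> h; apply: ga_ext => z; rewrite h. Qed.

Lemma peel (G : (('I_N -> algC) -> algC) -> Prop) (n : nat) u v a b :
  (forall u v, (deg u v <= n)%N -> (forall i, weight A u v i = 0) -> gen_alg G (mono u v)) ->
  (deg u v <= n.+1)%N -> (forall i, weight A u v i = 0) ->
  (0 < u a)%N -> (0 < v b)%N -> (forall i, A i a = A i b) ->
  gen_alg G (fun z => z a * (z b)^*) -> gen_alg G (mono u v).
Proof.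
move=> IH hd hw ua vb hab hg.
pose u' j := (u j - delta a j)%N; pose v' j := (v j - delta b j)%N.
have eu j : u j = addf (delta a) u' j.
  by rewrite /addf /u' /delta; case: eqP => [->|]; rewrite /=; lia.
have ev j : v j = addf (delta b) v' j.
  by rewrite /addf /v' /delta; case: eqP => [->|]; rewrite /=; lia.
apply: (gen_ext (g := fun z => (z a * (z b)^*) * mono u' v' z)).
  by move=> z; rewrite (mono_ext z eu ev) mono_add mono_delta.
apply: ga_mul => //; apply: IH.
  move: hd; rewrite (deg_ext eu ev) deg_add.
  have : (1 <= deg (delta a) (delta b))%N.
    by rewrite /deg (bigD1 a) //= /delta eqxx -addnA.
  move=> h1 h2; lia.
by move=> i; have := hw i; rewrite (weight_ext i eu ev) weight_add weight_delta hab subrr add0r.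
Qed.

End Peel.

Lemma gen_conj (X : Type) (G : (X -> algC) -> Prop) f :
  (forall g, G g -> gen_alg G (fun z => (g z)^*)) -> gen_alg G f -> gen_alg G (fun z => (f z)^*).
Proof.
move=> hG; elim => {f}.
- exact: hG.
- by move=> c; exact: ga_const.
- move=> f g _ hf _ hg; apply: (ga_ext _ (ga_add hf hg)) => z; by rewrite rmorphD.
- move=> f g _ hf _ hg; apply: (ga_ext _ (ga_mul hf hg)) => z; by rewrite rmorphM.
- by move=> f g e _ h; apply: (ga_ext _ h) => z; rewrite e.
Qed.

Lemma pick_s (k : nat) (u : 'I_k -> nat) (m : nat) : (m <= \sum_(j < k) u j)%N ->
  exists s : 'I_k -> nat, (forall j, s j <= u j)%N /\ (\sum_(j < k) s j)%N = m.
Proof.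
elim: m => [|m IH] hm.
  by exists (fun _ => 0%N); split => //; rewrite big1.
have [s [hs1 hs2]] := IH (ltnW hm).
have [j0 hj0] : exists j0, (s j0 < u j0)%N.
  case: (boolP [exists j, s j < u j]%N) => [/existsP //|].
  rewrite negb_exists => /forallP h; exfalso.
  have : (\sum_(j < k) u j <= \sum_(j < k) s j)%N.
    by apply: leq_sum => j _; move: (h j); rewrite -leqNgt.
  by rewrite hs2; lia.
exists (fun j => s j + (j == j0))%N; split.
  by move=> j; case: eqP => [->|_]; [rewrite addn1 | rewrite addn0].
rewrite big_split /= hs2 (bigD1 j0) //= eqxx big1 ?addn0 ?addn1 // => j /negPf -> //.
Qed.

Section Main.
Variables (l k : nat) (a nn : 'I_l -> nat).
Hypotheses (ha : forall i, (0 < a i)%N) (hn : forall i, (0 < nn i)%N)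
  (cop : forall i, coprime (a i) (nn i)).
Local Notation A := (@typeI_A l k a nn).
Local Notation L i := (lshift k i).
Local Notation R j := (rshift l j).
Local Notation Z0 := (@zerof (l + k)%N).
Local Notation G := (@gens1234 l k a nn).

Lemma alpha_gt0 : (0 < alphaA a)%N.
Proof. by rewrite /alphaA; elim/big_ind: _ => // x y hx hy; rewrite lcmn_gt0 hx hy. Qed.

Lemma dvd_alpha i : (a i %| alphaA a)%N.
Proof. exact: (biglcmn_sup i). Qed.

Lemma mA_eq i : (a i * mA a nn i = nn i * alphaA a)%N.
Proof. by rewrite /mA mulnC divnK // dvdn_mull // dvd_alpha. Qed.

Lemma split_cases (P : 'I_(l + k) -> Prop) :
  (forall i, P (L i)) -> (forall j, P (R j)) -> forall j, P j.
Proof. by move=> h1 h2 j; rewrite -(splitK j); case: (split j) => j' /=. Qed.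

Lemma mono_one u v : (forall j, u j = 0%N) -> (forall j, v j = 0%N) -> gen_alg G (mono u v).
Proof.
move=> hu hv; apply: (gen_ext (g := fun _ => 1)); last exact: ga_const.
by move=> z; rewrite (mono_ext z hu hv) mono0.
Qed.

Lemma key n u :
  (forall u v, (deg u v <= n)%N -> (forall i, weight A u v i = 0) -> gen_alg G (mono u v)) ->
  (deg u Z0 <= n.+1)%N -> (forall i, weight A u Z0 i = 0) -> gen_alg G (mono u Z0).
Proof.
move=> IH hd hw.
set D := (\sum_(j < k) u (R j))%N.
have hsum : \sum_(j < k) ((u (R j))%:Z - (Z0 (R j))%:Z) = D%:Z.
  by rewrite /D -sumz; apply: eq_bigr => j _; rewrite /zerof subr0.
have hi i : (a i * u (L i) = nn i * D)%N.
  have := hw i; rewrite weight_typeI hsum /zerof; lia.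
have [D0|Dpos] := eqVneq D 0%N.
  apply: mono_one => //; apply: split_cases => [i|j].
    by have := hi i; rewrite D0 muln0 => /eqP; rewrite muln_eq0 (gtn_eqF (ha i)) => /eqP.
  by apply/eqP; rewrite -leqn0 -D0 /D (bigD1 j) //= leq_addr.
have adv : (alphaA a %| D)%N.
  apply/dvdn_biglcmP => i _; rewrite -(Gauss_dvdr _ (cop i)) -hi dvdn_mulr //.
have aD : (alphaA a <= D)%N by apply: dvdn_leq => //; rewrite lt0n.
have [s [hs1 hs2]] := pick_s aD.
have hm i : (mA a nn i <= u (L i))%N.
  rewrite -(leq_pmul2l (ha i)) mA_eq hi leq_mul2l aD orbT //.
pose uq (j : 'I_(l + k)) := match split j with inl i => mA a nn i | inr j' => s j' end.
have uqL i : uq (L i) = mA a nn i by rewrite /uq -[lshift k i]/(unsplit (inl i)) unsplitK.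
have uqR j : uq (R j) = s j by rewrite /uq -[rshift l j]/(unsplit (inr j)) unsplitK.
pose u' j := (u j - uq j)%N.
have eu : forall j, u j = addf uq u' j.
  apply: split_cases => [i|j]; rewrite /addf /u' ?uqL ?uqR subnKC //.
have ez : forall j, Z0 j = addf Z0 Z0 j by [].
have wq i : weight A uq Z0 i = 0.
  rewrite weight_typeI.
  have -> : \sum_(j < k) ((uq (R j))%:Z - (Z0 (R j))%:Z) = (alphaA a)%:Z.
    by rewrite -hs2 -sumz; apply: eq_bigr => j _; rewrite uqR /zerof subr0.
  rewrite uqL /zerof; have := mA_eq i; lia.
apply: (gen_ext (g := fun z => gen_q a nn s z * mono u' Z0 z)).
  move=> z; rewrite (mono_ext z eu ez) mono_add; congr (_ * _).
  rewrite /mono big_split_ord /gen_q; congr (_ * _); apply: eq_bigr => j _;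
    by rewrite ?uqL ?uqR /zerof expr0 mulr1.
apply: ga_mul.
  by apply: ga_gen; right; right; exists s; split => //; left.
apply: IH.
  move: hd; rewrite (deg_ext eu ez) deg_add.
  have : (alphaA a <= deg uq Z0)%N.
    rewrite /deg big_split_ord /= -hs2; apply: leq_trans (leq_addl _ _).
    by apply: leq_sum => j _; rewrite uqR /zerof addn0.
  have := alpha_gt0; lia.
by move=> i; have := hw i; rewrite (weight_ext A i eu ez) weight_add wq add0r.
Qed.

Lemma G_conj g : G g -> gen_alg G (fun z => (g z)^*).
Proof.
case=> [[i ->]|[[i [j ->]]|[s [hs [->|->]]]]].
- by apply: (gen_ext (g := gen_r i)); [move=> z; rewrite /gen_r rmorphM /= conjCK mulrC|apply: ga_gen; left; exists i].
- by apply: (gen_ext (g := gen_p j i)); [move=> z; rewrite /gen_p rmorphM /= conjCK mulrC|apply: ga_gen; right; left; exists j, i].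
- by apply: ga_gen; right; right; exists s; split => //; right.
- by apply: (gen_ext (g := gen_q a nn s)); [move=> z; rewrite /gen_qbar conjCK|apply: ga_gen; right; right; exists s; split => //; left].
Qed.

Lemma mono_gen n u v : (deg u v <= n)%N -> (forall i, weight A u v i = 0) -> gen_alg G (mono u v).
Proof.
elim: n u v => [|n IH] u v hd hw.
  have h0 j : (u j + v j = 0)%N.
    by apply/eqP; rewrite -leqn0; apply: leq_trans hd; rewrite /deg (bigD1 j) //= leq_addr.
  by apply: mono_one => j; have := h0 j; lia.
have [/existsP [i /andP [h1 h2]]|nA] := boolP [exists i, (0 < u (L i)) && (0 < v (L i))]%N.
  apply: (peel IH hd hw h1 h2) => //.
  by apply: ga_gen; left; exists i.
have [/existsP [j /existsP [j' /andP [h1 h2]]]|nB] :=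
  boolP [exists j, exists j', (0 < u (R j)) && (0 < v (R j'))]%N.
  apply: (peel IH hd hw h1 h2) => [i|]; first by rewrite !tA_r.
  by apply: ga_gen; right; left; exists j, j'.
have nA' i : ~~ ((0 < u (L i)) && (0 < v (L i)))%N.
  by apply/negP => hi; move/negP: nA; apply; apply/existsP; exists i.
have [/existsP [j0 hj0]|nC] := boolP [exists j, 0 < u (R j)]%N.
  have vR j : v (R j) = 0%N.
    apply/eqP; rewrite -leqn0 leqNgt; apply/negP => hv; move/negP: nB; apply.
    by apply/existsP; exists j0; apply/existsP; exists j; rewrite hj0 hv.
  have hsum : \sum_(j < k) ((u (R j))%:Z - (v (R j))%:Z) = (\sum_(j < k) u (R j))%N%:Z.
    by rewrite -sumz; apply: eq_bigr => j _; rewrite vR subr0.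
  have vL i : v (L i) = 0%N.
    have := hw i; rewrite weight_typeI hsum; have := nA' i; have := ha i; have := hn i.
    case: (u (L i)) => [|x]; case: (v (L i)) => [|y] //=; nia.
  have ev : forall j, v j = Z0 j by apply: split_cases.
  apply: (gen_ext (g := mono u Z0)); first by move=> z; apply: mono_ext.
  apply: (key IH); first by rewrite -(deg_ext (fun j => erefl) ev).
  by move=> i; rewrite -(weight_ext A i (fun j => erefl) ev).
have uR j : u (R j) = 0%N.
  apply/eqP; rewrite -leqn0 leqNgt; apply/negP => hu; move/negP: nC; apply.
  by apply/existsP; exists j.
have hsum : \sum_(j < k) ((u (R j))%:Z - (v (R j))%:Z) = - (\sum_(j < k) v (R j))%N%:Z.
  by rewrite -sumz -sumrN; apply: eq_bigr => j _; rewrite uR sub0r.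
have uL i : u (L i) = 0%N.
  have := hw i; rewrite weight_typeI hsum; have := nA' i; have := ha i; have := hn i.
  case: (u (L i)) => [|x]; case: (v (L i)) => [|y] //=; nia.
have eu : forall j, u j = Z0 j by apply: split_cases.
apply: (gen_ext (g := fun z => (mono v Z0 z)^*)).
  by move=> z; rewrite mono_conj; apply: mono_ext.
apply: gen_conj; first exact: G_conj.
apply: (key IH).
  by rewrite deg_swap -(deg_ext eu (fun j => erefl)).
move=> i; apply/eqP; rewrite -oppr_eq0 -weight_swap -(weight_ext A i eu (fun j => erefl)).
by rewrite hw.
Qed.

End Main.

Lemma faith_cop (l k : nat) (a nn : 'I_l -> nat) (ha : forall i, (0 < a i)%N)
  (hf : faithful (@typeI_A l k a nn)) i : coprime (a i) (nn i).
Proof.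
have g_gt0 : (0 < gcdn (a i) (nn i))%N by rewrite gcdn_gt0 ha.
have [zeta pz] := C_prim_root_exists g_gt0.
pose t (i' : 'I_l) := if i' == i then zeta else 1.
have ht : in_torus t.
  by move=> i'; rewrite /t; case: eqP => _; [exact: zeta_norm g_gt0 pz | exact: normr1].
have hz1 m : (gcdn (a i) (nn i) %| m)%N -> zeta ^+ m = 1.
  by move=> hm; apply/eqP; rewrite -(prim_order_dvd pz).
have := hf t ht.
have hL (j' : 'I_l) : tchar (@typeI_A l k a nn) t (lshift k j') = 1.
  rewrite /tchar big1 // => i' _; rewrite tA_l /t.
  case: (eqVneq i' i) => [->|_]; last exact: exp1rz.
  case: eqP => _; last exact: expr0z.
  by rewrite -exprnN hz1 ?invr1 // dvdn_gcdl.
have hR (j : 'I_k) : tchar (@typeI_A l k a nn) t (rshift l j) = 1.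
  rewrite /tchar big1 // => i' _; rewrite tA_r /t.
  case: (eqVneq i' i) => [->|_]; last exact: exp1rz.
  by rewrite -exprnP hz1 // dvdn_gcdr.
move=> /(_ (split_cases hL hR) i); rewrite /t eqxx => z1.
by have := prim_order_dvd pz 1; rewrite z1 expr1 eqxx dvdn1.
Qed.

Section Final.
Variables (l k : nat) (a nn : 'I_l -> nat).
Hypotheses (ha : forall i, (0 < a i)%N) (hn : forall i, (0 < nn i)%N).
Local Notation A := (@typeI_A l k a nn).
Local Notation L i := (lshift k i).
Local Notation R j := (rshift l j).
Local Notation Z0 := (@zerof (l + k)%N).
Local Notation G := (@gens1234 l k a nn).

Definition qexp (s : 'I_k -> nat) (j : 'I_(l + k)) : nat :=
  match split j with inl i => mA a nn i | inr j' => s j' end.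

Lemma qexpL s i : qexp s (L i) = mA a nn i.
Proof. by rewrite /qexp -[lshift k i]/(unsplit (inl i)) unsplitK. Qed.
Lemma qexpR s j : qexp s (R j) = s j.
Proof. by rewrite /qexp -[rshift l j]/(unsplit (inr j)) unsplitK. Qed.

Lemma mono_qexp s z : mono (qexp s) Z0 z = gen_q a nn s z.
Proof.
rewrite /mono big_split_ord /gen_q; congr (_ * _); apply: eq_bigr => j _;
  by rewrite ?qexpL ?qexpR /zerof expr0 mulr1.
Qed.

Lemma weight_qexp s i : (\sum_(j < k) s j)%N = alphaA a -> weight A (qexp s) Z0 i = 0.
Proof.
move=> hs2; rewrite weight_typeI.
have -> : \sum_(j < k) ((qexp s (R j))%:Z - (Z0 (R j))%:Z) = (alphaA a)%:Z.
  by rewrite -hs2 -sumz; apply: eq_bigr => j _; rewrite qexpR /zerof subr0.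
rewrite qexpL /zerof; have := @mA_eq l a nn i; lia.
Qed.

Lemma inv_ext (f g : pt l k -> algC) : (forall z, f z = g z) ->
  torus_invariant A g -> torus_invariant A f.
Proof. by move=> e h t ht z; rewrite !e h. Qed.

Lemma inv_mono u v : (forall i, weight A u v i = 0) -> torus_invariant A (mono u v).
Proof.
move=> hw t ht z; rewrite mono_act // big1 ?mul1r // => i _; by rewrite hw expr0z.
Qed.

Lemma gens_inv f : G f -> torus_invariant A f.
Proof.
case=> [[i ->]|[[i [j ->]]|[s [hs [->|->]]]]].
- apply: (inv_ext (g := mono (delta (L i)) (delta (L i)))); first by move=> z; rewrite mono_delta.
  by apply: inv_mono => i'; rewrite weight_delta subrr.
- apply: (inv_ext (g := mono (delta (R i)) (delta (R j)))); first by move=> z; rewrite mono_delta.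
  by apply: inv_mono => i'; rewrite weight_delta !tA_r subrr.
- apply: (inv_ext (g := mono (qexp s) Z0)); first by move=> z; rewrite mono_qexp.
  by apply: inv_mono => i'; apply: weight_qexp.
- apply: (inv_ext (g := mono Z0 (qexp s))).
    by move=> z; rewrite /gen_qbar -mono_qexp mono_conj.
  by apply: inv_mono => i'; rewrite weight_swap weight_qexp ?oppr0.
Qed.

End Final.

Lemma gen_sum (X : Type) (G : (X -> algC) -> Prop) (I : Type) (r : seq I) (F : I -> X -> algC) :
  (forall j, gen_alg G (F j)) -> gen_alg G (fun z => \sum_(j <- r) F j z).
Proof.
move=> hF; elim: r => [|j r IH].
  by apply: (ga_ext _ (ga_const G 0)) => z; rewrite big_nil.
by apply: (ga_ext _ (ga_add (hF j) IH)) => z; rewrite big_cons.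
Qed.

Lemma r_on_ZA (l k : nat) (a nn : 'I_l -> nat) (ha : forall i, (0 < a i)%N) i (z : pt l k) :
  in_ZA (@typeI_A l k a nn) z ->
  @gen_r l k i z = (nn i)%:R / (a i)%:R * \sum_(j < k) @gen_p l k j j z.
Proof.
move=> /(_ i) h.
have anz : ((a i)%:R : algC) != 0 by rewrite pnatr_eq0 -lt0n ha.
have {h} : \sum_(j < l + k) ((typeI_A a nn i j)%:~R * (z j * (z j)^*)) = 0.
  by move: h => /eqP; rewrite mulf_eq0 invr_eq0 pnatr_eq0 /= => /eqP.
rewrite big_split_ord /= (bigD1 i) //= big1 ?addr0 => [|i' ne]; last first.
  by rewrite tA_l (negPf ne) mul0r.
rewrite tA_l eqxx.
under eq_bigr => j _ do rewrite tA_r.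
rewrite -mulr_sumr intrN => h.
rewrite /gen_r /gen_p; apply: (mulfI anz).
rewrite [RHS]mulrA [_ * (_ / _)]mulrCA divff // mulr1.
apply/eqP; rewrite -subr_eq0 -oppr_eq0 opprB addrC -mulNr; apply/eqP; exact: h.
Qed.

Section ZA.
Variables (l k : nat) (a nn : 'I_l -> nat).
Hypotheses (ha : forall i, (0 < a i)%N).

Lemma to_ZA h : gen_alg (@gens1234 l k a nn) h ->
  exists g, gen_alg (@gens234 l k a nn) g /\
    forall z, in_ZA (@typeI_A l k a nn) z -> h z = g z.
Proof.
elim=> {h}.
- move=> f [[i ->]|hf]; last by exists f; split => //; exact: ga_gen.
  exists (fun z => (nn i)%:R / (a i)%:R * \sum_(j < k) @gen_p l k j j z); split.
    apply: ga_mul; first exact: ga_const.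
    by apply: gen_sum => j; apply: ga_gen; left; exists j, j.
  by move=> z hz; apply: r_on_ZA.
- by move=> c; exists (fun _ => c); split => //; exact: ga_const.
- move=> f g _ [f' [h1 h2]] _ [g' [h3 h4]]; exists (fun z => f' z + g' z); split.
    exact: ga_add.
  by move=> z hz; rewrite h2 // h4.
- move=> f g _ [f' [h1 h2]] _ [g' [h3 h4]]; exists (fun z => f' z * g' z); split.
    exact: ga_mul.
  by move=> z hz; rewrite h2 // h4.
- move=> f g e _ [f' [h1 h2]]; exists f'; split => // z hz; by rewrite -e h2.
Qed.

End ZA.

Unset Implicit Arguments.

Theorem proposition4p1 (l k : nat) (a nn : 'I_l -> nat)
  (ha : forall i, (0 < a i)%N) (hn : forall i, (0 < nn i)%N)
  (hfaith : faithful (@typeI_A l k a nn)) :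
  (forall f, gens1234 a nn f -> torus_invariant (@typeI_A l k a nn) f) /\
  (forall f : pt l k -> algC, is_poly f -> torus_invariant (@typeI_A l k a nn) f ->
     gen_alg (gens1234 a nn) f) /\
  (forall f : pt l k -> algC, is_poly f -> torus_invariant (@typeI_A l k a nn) f ->
     exists g, gen_alg (gens234 a nn) g /\
       forall z, in_ZA (@typeI_A l k a nn) z -> f z = g z).
Proof.
have cop := faith_cop ha hfaith.
have P2 : forall f : pt l k -> algC, is_poly f -> torus_invariant (@typeI_A l k a nn) f ->
     gen_alg (gens1234 a nn) f.
  move=> f hp hi; have [s [hw he]] := inv_proj hp hi.
  apply: (gen_ext he); apply: polyrep_gen => x hx.
  exact: (mono_gen ha hn cop (leqnn _) (hw x hx)).
split; first exact: gens_inv.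
split; first exact: P2.
by move=> f hp hi; exact: (to_ZA ha (P2 f hp hi)).
Qed.
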